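(* For integers $1\le r\le n-1$, the convex hull of $\{\frac{1}{r+1}A: A\in RB(r+1,n)\}$ is contained in the convex hull of $\{\frac1r A: A\in RB(r,n)\}$.
   Context: $RB(r,n)$ is the set of $n\times n$ $0/1$ matrices all of whose row and column sums equal $r$. *)

(* Defs.v *)
From mathcomp Require Import all_boot all_order all_algebra.
Unset Printing Implicit Defensive.
Import Order.TTheory GRing.Theory Num.Theory.
Local Open Scope ring_scope.

Definition RB (R : realFieldType) (r n : nat) (A : 'M[R]_n) : Prop :=
  [/\ (forall i j, A i j = 0 \/ A i j = 1),
      (forall i, \sum_(j < n) A i j = r%:R) &
      (forall j, \sum_(i < n) A i j = r%:R)].

Definition conv_hull (R : realFieldType) (n : nat) (S : 'M[R]_n -> Prop)
    (X : 'M[R]_n) : Prop :=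
  exists (k : nat) (w : 'I_k -> R) (P : 'I_k -> 'M[R]_n),
    [/\ (forall i, 0 <= w i),
        \sum_(i < k) w i = 1,
        (forall i, S (P i)) &
        X = \sum_(i < k) w i *: P i].

Definition scaled_RB (R : realFieldType) (r n : nat) (M : 'M[R]_n) : Prop :=
  exists A : 'M[R]_n, RB R r n A /\ M = (r%:R)^-1 *: A.

(* Main.v *)
Require Import Defs.
From mathcomp Require Import all_boot all_order all_algebra zify.
Import Order.TTheory GRing.Theory Num.Theory.

Section Hall.
Variables (T U : finType) (y0 : U).

Definition NB (E : T -> U -> bool) (S : {set T}) : {set U} :=
  [set y | [exists x in S, E x y]].

Definition hallc (E : T -> U -> bool) (A : {set T}) :=
  forall S : {set T}, S \subset A -> #|S| <= #|NB E S|.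

Lemma hall_ind k : forall (E : T -> U -> bool) (A : {set T}), #|A| <= k ->
  hallc E A -> exists f : T -> U, {in A &, injective f} /\ {in A, forall x, E x (f x)}.
Proof.
elim: k => [|k IH] E A hA hH.
  have A0 : A = set0 by apply: cards0_eq; lia.
  by exists (fun=> y0); split => x; rewrite A0 inE.
case: (boolP [exists S : {set T}, [&& S \subset A, S != set0, S != A & #|NB E S| <= #|S|]]).
- case/existsP => S /and4P [sSA S0 SA hS].
  have ltS : #|S| < #|A| by apply: proper_card; rewrite properEneq SA.
  have [f1 [inj1 E1]] : exists f : T -> U, {in S &, injective f} /\ {in S, forall x, E x (f x)}.
    apply: IH; first lia.
    by move=> S' sS'; apply: hH; apply: subset_trans sSA.
  pose E2 := fun x y => E x y && (y \notin NB E S).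
  have [f2 [inj2 E2f]] : exists f : T -> U, {in A :\: S &, injective f} /\
       {in A :\: S, forall x, E2 x (f x)}.
    apply: IH.
      rewrite cardsDS //.
      have : 0 < #|S| by rewrite card_gt0.
      lia.
    move=> S' sS'.
    have dis : S' :&: S = set0.
      apply/setP => z; rewrite !inE; apply/negP => /andP [zS' zS].
      by move/subsetP: sS' => /(_ z zS'); rewrite !inE zS.
    have hU : #|S' :|: S| <= #|NB E (S' :|: S)|.
      apply: hH; rewrite subUset sSA andbT.
      apply: subset_trans sS' _; exact: subsetDl.
    have cU : #|S' :|: S| = #|S'| + #|S|.
      by have := cardsUI S' S; rewrite dis cards0; lia.
    have sub1 : NB E (S' :|: S) \subset (NB E2 S') :|: NB E S.
      apply/subsetP => y; rewrite !inE => /existsP [x /andP [xU Exy]].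
      case yN: [exists x0 in S, E x0 y]; first by rewrite orbT.
      rewrite orbF; apply/existsP; exists x.
      move: xU; rewrite inE => /orP [xS'|xS].
        by rewrite xS' /E2 Exy inE yN.
      by move: yN => /existsP; case; exists x; rewrite xS.
    have := subset_leq_card sub1.
    have := leq_card_setU (NB E2 S') (NB E S).
    case => le _.
    lia.
  exists (fun x => if x \in S then f1 x else f2 x); split.
    move=> x x' xA x'A /=.
    case xS: (x \in S); case x'S: (x' \in S).
    + by apply: inj1.
    + move=> eq; exfalso.
      have := E2f x'; rewrite !inE x'S x'A /= => /(_ isT) /andP [_].
      rewrite -eq inE; case/existsP; exists x; by rewrite xS E1.
    + move=> eq; exfalso.
      have := E2f x; rewrite !inE xS xA /= => /(_ isT) /andP [_].
      rewrite eq inE; case/existsP; exists x'; by rewrite x'S E1.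
    + by apply: inj2; rewrite !inE ?xS ?x'S ?xA ?x'A.
  move=> x xA /=; case xS: (x \in S); first exact: E1.
  by have := E2f x; rewrite !inE xS xA /= => /(_ isT) /andP [].
- move/existsPn => hN.
  case: (set_0Vmem A) => [->|[x xA]].
    by exists (fun=> y0); split => z; rewrite inE.
  have : 1 <= #|NB E [set x]| by have := hH [set x]; rewrite sub1set xA cards1; apply.
  rewrite card_gt0 => /set0Pn [y]; rewrite inE => /existsP [x1].
  rewrite inE => /andP [/eqP -> Exy].
  pose E1 := fun a b => E a b && (b != y).
  have [f1 [inj1 E1f]] : exists f : T -> U, {in A :\ x &, injective f} /\
       {in A :\ x, forall z, E1 z (f z)}.
    apply: IH.
      by have := cardsD1 x A; rewrite xA; lia.
    move=> S' sS'.
    case: (set_0Vmem S') => [->|[z zS']]; first by rewrite cards0.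
    have := hN S'.
    have sA : S' \subset A by apply: subset_trans sS' (subsetDl _ _).
    have nA : S' != A.
      apply/eqP => eq; move/subsetP: sS' => /(_ x); rewrite eq xA !inE eqxx.
      by move/(_ isT).
    have n0 : S' != set0 by apply/set0Pn; exists z.
    rewrite sA n0 nA /= -ltnNge => lt.
    have sub : NB E S' :\ y \subset NB E1 S'.
      apply/subsetP => b; rewrite !inE => /andP [bneq /existsP [a /andP [aS Eab]]].
      by apply/existsP; exists a; rewrite aS /E1 Eab bneq.
    have := subset_leq_card sub.
    have := cardsD1 y (NB E S').
    case: (y \in NB E S') => /=; lia.
  exists (fun z => if z == x then y else f1 z); split.
    move=> a b aA bA /=.
    case: (eqVneq a x) => [->|ax]; case: (eqVneq b x) => [->|bx] //.
    + move=> eq; exfalso; have := E1f b; rewrite !inE bx bA /= => /(_ isT).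
      by rewrite /E1 -eq eqxx andbF.
    + move=> eq; exfalso; have := E1f a; rewrite !inE ax aA /= => /(_ isT).
      by rewrite /E1 eq eqxx andbF.
    + by apply: inj1; rewrite !inE ?ax ?bx ?aA ?bA.
  move=> z zA /=; case: (eqVneq z x) => [->|zx] //.
  by have := E1f z; rewrite !inE zx zA /= => /(_ isT) /andP [].
Qed.
End Hall.
Arguments NB {T U}.
Arguments hallc {T U}.

Local Open Scope ring_scope.

Section Mx.
Variables (R : realFieldType) (n : nat).

Definition pmx (f : 'I_n -> 'I_n) : 'M[R]_n := \matrix_(i, j) ((f i == j)%:R).

Lemma RB_ge0 {k} {A : 'M[R]_n} : RB R k n A -> forall i j, 0 <= A i j.
Proof. by case=> h _ _ i j; case: (h i j) => ->. Qed.

Lemma pmx_row f i : \sum_(j < n) pmx f i j = 1.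
Proof.
rewrite (bigD1 (f i)) //= big1 ?addr0; first by rewrite mxE eqxx.
by move=> j hj; rewrite mxE eq_sym (negbTE hj).
Qed.

Lemma pmx_col f : injective f -> forall j, \sum_(i < n) pmx f i j = 1.
Proof.
move=> inj j; have /codomP [i0 ->] := injF_onto inj j.
rewrite (bigD1 i0) //= big1 ?addr0; first by rewrite mxE eqxx.
by move=> i hi; rewrite mxE (inj_eq inj) (negbTE hi).
Qed.

Lemma RB_sub {k} {A : 'M[R]_n} {f} : RB R k.+1 n A -> injective f ->
  (forall i, A i (f i) = 1) -> RB R k n (A - pmx f).
Proof.
move=> [h01 hr hc] inj hf; split.
- move=> i j; rewrite !mxE; case: (eqVneq (f i) j) => [<-|_].
    by rewrite hf subrr; left.
  by rewrite subr0; apply: h01.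
- move=> i; rewrite (eq_bigr (fun j => A i j - pmx f i j)); last by move=> j _; rewrite !mxE.
  by rewrite sumrB hr pmx_row -natr1 addrK.
- move=> j; rewrite (eq_bigr (fun i => A i j - pmx f i j)); last by move=> i _; rewrite !mxE.
  by rewrite sumrB hc pmx_col // -natr1 addrK.
Qed.

Lemma RB_match {k} {A : 'M[R]_n} : RB R k.+1 n A ->
  exists f : 'I_n -> 'I_n, injective f /\ forall i, A i (f i) = 1.
Proof.
move=> hA; have [h01 hr hc] := hA.
case: (posnP n) => [n0|npos].
  by exists id; split => // i; exfalso; move: (ltn_ord i); rewrite [X in (_ < X)%N]n0.
pose E := fun i j => A i j == 1.
have hE0 : forall i j, ~~ E i j -> A i j = 0.
  by move=> i j; rewrite /E; case: (h01 i j) => ->; rewrite ?eqxx.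
have [f [inj hf]] : exists f : 'I_n -> 'I_n,
    {in setT &, injective f} /\ {in setT, forall x, E x (f x)}.
  apply: (@hall_ind _ _ (Ordinal npos) n); first by rewrite cardsT card_ord.
  move=> S _.
  have ge0 := RB_ge0 hA.
  have key : \sum_(i in S) (k.+1%:R : R) <= \sum_(j in NB E S) (k.+1%:R : R).
    rewrite (eq_bigr (fun i => \sum_(j in NB E S) A i j)); last first.
      move=> i iS; rewrite -(hr i) [LHS](bigID (mem (NB E S))) /=.
      rewrite [X in _ + X = _]big1 ?addr0 // => j.
      rewrite !inE => /existsPn /(_ i); rewrite iS /=; exact: hE0.
    rewrite exchange_big /=; apply: ler_sum => j _.
    rewrite -(hc j) [X in _ <= X](bigID (mem S)) /= lerDl.
    by apply: sumr_ge0 => i _; apply: ge0.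
  by move: key; rewrite !sumr_const -!mulrnA ler_nat leq_pmul2l.
exists f; split; first by move=> x y; apply: inj; rewrite inE.
by move=> i; apply/eqP; apply: hf; rewrite inE.
Qed.

Lemma RB_decomp k (A : 'M[R]_n) : RB R k n A ->
  exists F : 'I_k -> 'I_n -> 'I_n, (forall l, injective (F l)) /\ A = \sum_l pmx (F l).
Proof.
elim: k A => [|k IH] A hA.
  exists (fun _ => id); split; first by move=> l x y.
  rewrite big_ord0.
  have [_ hr _] := hA.
  apply/matrixP => i j; rewrite mxE.
  exact: (psumr_eq0P (fun j _ => RB_ge0 hA i j) (hr i)) j isT.
have [f [inj hf]] := RB_match hA.
have [F [injF eqF]] := IH _ (RB_sub hA inj hf).
exists (fun l => if unlift ord0 l is Some m then F m else f); split.
  by move=> l; case: (unlift ord0 l).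
rewrite big_ord_recl unlift_none.
under eq_bigr do rewrite liftK.
by rewrite -eqF addrC subrK.
Qed.

Lemma sum_ge_term (I : finType) (Q : I -> 'M[R]_n) l i j :
  (forall m i j, 0 <= Q m i j) -> Q l i j <= (\sum_m Q m) i j.
Proof.
move=> h; rewrite summxE (bigD1 l) //= lerDl; exact: sumr_ge0.
Qed.

Lemma hull_fin (I : finType) (S : 'M[R]_n -> Prop) (w : I -> R) (P : I -> 'M[R]_n) :
  (forall i, 0 <= w i) -> \sum_i w i = 1 -> (forall i, S (P i)) ->
  conv_hull R n S (\sum_i w i *: P i).
Proof.
move=> h0 h1 hS; exists #|I|, (fun i => w (enum_val i)), (fun i => P (enum_val i)).
split => //.
- by rewrite -h1 [RHS](reindex (@enum_val I (mem predT))) //; exact: onW_bij (enum_val_bij _).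
- by rewrite [LHS](reindex (@enum_val I (mem predT))) //; exact: onW_bij (enum_val_bij _).
Qed.

End Mx.

Theorem corollary5p13 (R : realFieldType) (n r : nat) :
  (1 <= r)%N -> (r <= n - 1)%N ->
  forall X : 'M[R]_n,
    @conv_hull R n (scaled_RB R r.+1 n) X -> @conv_hull R n (scaled_RB R r n) X.
Proof.
move=> r1 _ X [k [w [P [w0 w1 hP ->]]]].
have [A hA] := fin_all_exists hP.
have [FF hFF] := fin_all_exists (fun i => @RB_decomp R n _ _ (proj1 (hA i))).
have r0 : (r%:R : R) != 0 by rewrite pnatr_eq0 -lt0n.
have r10 : (r.+1%:R : R) != 0 by rewrite pnatr_eq0.
have ge0 : forall i m x y, 0 <= pmx R n (FF i m) x y.
  by move=> i m x y; rewrite mxE ler0n.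
have hone : forall i m x, A i x (FF i m x) = 1.
  move=> i m x; have [[h01 _ _] _] := hA i.
  have := @sum_ge_term R n _ _ m x (FF i m x) (ge0 i).
  rewrite -(proj2 (hFF i)) mxE eqxx.
  by case: (h01 x (FF i m x)) => -> //; rewrite ler10.
have -> : \sum_(i < k) w i *: P i =
    \sum_(p : 'I_k * 'I_r.+1) (w p.1 / r.+1%:R) *: ((r%:R)^-1 *: (A p.1 - pmx R n (FF p.1 p.2))).
  rewrite -(pair_bigA _ (fun i l => (w i / r.+1%:R) *: ((r%:R)^-1 *: (A i - pmx R n (FF i l))))) /=.
  apply: eq_bigr => i _.
  rewrite (proj2 (hA i)).
  under eq_bigr do rewrite scalerA.
  rewrite -scaler_sumr sumrB sumr_const card_ord -(proj2 (hFF i)).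
  rewrite -[A i *+ r.+1]scaler_nat -[X in _ *: A i - X]scale1r -scalerBl.
  rewrite -natr1 addrK scalerA scalerA; congr (_ *: _).
  by rewrite -mulrA mulVf // mulr1.
apply: hull_fin.
- by move=> p; apply: divr_ge0 => //; apply: ler0n.
- rewrite -(pair_bigA _ (fun i (l : 'I_r.+1) => w i / r.+1%:R)) /=.
  rewrite -[RHS]w1.
  apply: eq_bigr => i _; rewrite sumr_const card_ord -[w i / _ *+ _]mulr_natr -mulrA mulVf //.
  by rewrite mulr1.
- move=> [i m]; exists (A i - pmx R n (FF i m)); split => //.
  apply: RB_sub; first exact: (proj1 (hA i)).
  + exact: (proj1 (hFF i)).
  + exact: hone.
Qed.
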